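(* Let $m>1$ be an integer and $0<\gamma<\frac12$. Then $\delta\mapsto F(m,\gamma,\delta)$ is non-increasing on $[0,1]$.
   Context: Logarithms base 2; $h$ is binary entropy; $\|u\|$ is Hamming weight. For an integer $m\ge1$, $\gamma\in(0,\frac12)$ and $\delta\in[0,1]$, let $H^*(m,\gamma,\delta)$ be the maximum entropy of a probability distribution $Q$ on $\mathbb{F}_2^m$ satisfying $\Pr_{u\sim Q}(u_i=1)=\gamma$ for all $1\le i\le m$ and $\Pr_{u\sim Q}(\|u\|\text{ odd})=\delta$; set $F(m,\gamma,\delta)=H^*(m,\gamma,\delta)-h(\delta)$ if such $Q$ exists and $F(m,\gamma,\delta)=-\infty$ otherwise. *)

(* Defs.v *)
From Stdlib Require Import Reals List Arith Classical ClassicalEpsilon.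
Import ListNotations.
Open Scope R_scope.

(* F_2^m represented as the list of all boolean lists of length m. *)
Fixpoint cube (m : nat) : list (list bool) :=
  match m with
  | O => [nil]
  | S k => map (cons false) (cube k) ++ map (cons true) (cube k)
  end.

Definition sumL (f : list bool -> R) (l : list (list bool)) : R :=
  fold_right (fun u acc => f u + acc) 0 l.

Definition weight (u : list bool) : nat := length (filter (fun b => b) u).

Definition log2 (x : R) : R := ln x / ln 2.

(* x log2 x, with 0 log 0 = 0 automatically since 0 * _ = 0 *)
Definition plogp (x : R) : R := x * log2 x.

Definition ent (m : nat) (Q : list bool -> R) : R :=
  - sumL (fun u => plogp (Q u)) (cube m).

Definition h (d : R) : R := - plogp d - plogp (1 - d).

(* Q (values on cube m) is a probability distribution on F_2^m with
   Pr(u_i = 1) = gamma for all 1 <= i <= m (0-based index i < m here)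
   and Pr(||u|| odd) = delta. *)
Definition feasible (m : nat) (gamma delta : R) (Q : list bool -> R) : Prop :=
  (forall u, In u (cube m) -> 0 <= Q u) /\
  sumL Q (cube m) = 1 /\
  (forall i : nat, (i < m)%nat ->
     sumL (fun u => if nth i u false then Q u else 0) (cube m) = gamma) /\
  sumL (fun u => if Nat.odd (weight u) then Q u else 0) (cube m) = delta.

Definition entropies (m : nat) (gamma delta : R) : R -> Prop :=
  fun x => exists Q, feasible m gamma delta Q /\ x = ent m Q.

(* H*(m,gamma,delta): the supremum (= maximum, by compactness) of the
   entropies of feasible distributions. *)
Definition Hstar (m : nat) (gamma delta : R) : R :=
  epsilon (inhabits 0) (fun H => is_lub (entropies m gamma delta) H).

Inductive ER : Type := Fin (r : R) | NegInf.

Definition ER_le (a b : ER) : Prop :=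
  match a, b with
  | NegInf, _ => True
  | Fin _, NegInf => False
  | Fin x, Fin y => x <= y
  end.

Definition F (m : nat) (gamma delta : R) : ER :=
  if excluded_middle_informative (exists Q, feasible m gamma delta Q)
  then Fin (Hstar m gamma delta - h delta)
  else NegInf.

(* Main.v *)
Require Import Defs.
From Stdlib Require Import Reals List Arith Classical ClassicalEpsilon Lra Lia.
Import ListNotations.
Open Scope R_scope.

Section S.
Lemma sumL_nil f : sumL f [] = 0. Proof. reflexivity. Qed.
Lemma sumL_cons f a l : sumL f (a :: l) = f a + sumL f l. Proof. reflexivity. Qed.

Lemma sumL_app f l1 l2 : sumL f (l1 ++ l2) = sumL f l1 + sumL f l2.
Proof. induction l1; simpl; [ring|]. unfold sumL in *. simpl. rewrite IHl1; ring. Qed.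

Lemma sumL_map {A} f (g : A -> list bool) (l : list A) :
  sumL f (map g l) = fold_right (fun u acc => f (g u) + acc) 0 l.
Proof. induction l; simpl; auto. unfold sumL in *. simpl. rewrite IHl. auto. Qed.

Lemma sumL_ext f g l : (forall x, In x l -> f x = g x) -> sumL f l = sumL g l.
Proof. induction l; intros H; simpl; auto. unfold sumL in *; simpl.
  rewrite H by (left; auto). rewrite IHl; auto. intros; apply H; right; auto. Qed.

Lemma sumL_plus f g l : sumL (fun x => f x + g x) l = sumL f l + sumL g l.
Proof. induction l; unfold sumL in *; simpl; [ring|]. rewrite IHl; ring. Qed.

Lemma sumL_scal c f l : sumL (fun x => c * f x) l = c * sumL f l.
Proof. induction l; unfold sumL in *; simpl; [ring|]. rewrite IHl; ring. Qed.

Lemma sumL_le f g l : (forall x, In x l -> f x <= g x) -> sumL f l <= sumL g l.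
Proof. induction l; intros H; unfold sumL in *; simpl; [lra|].
  assert (f a <= g a) by (apply H; left; auto).
  assert (fold_right (fun u acc => f u + acc) 0 l <= fold_right (fun u acc => g u + acc) 0 l)
   by (apply IHl; intros; apply H; right; auto). lra. Qed.

Lemma sumL_zero0 l : sumL (fun _ => 0) l = 0.
Proof. induction l; unfold sumL in *; simpl; auto. rewrite IHl; ring. Qed.

Lemma sumL_nonneg_zero f l : (forall x, In x l -> 0 <= f x) -> sumL f l = 0 ->
  forall x, In x l -> f x = 0.
Proof. induction l; intros H Hs x Hx; [destruct Hx|].
  rewrite sumL_cons in Hs.
  assert (0 <= f a) by (apply H; left; auto).
  assert (0 <= sumL f l). { rewrite <- (sumL_zero0 l). apply sumL_le. intros; apply H; right; auto. }
  destruct Hx as [<-|Hx]; [lra|]. apply IHl; auto. intros; apply H; right; auto. lra. Qed.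

Lemma sumL_cont (g : list bool -> R -> R) l : (forall u, continuity (g u)) ->
  continuity (fun t => sumL (fun u => g u t) l).
Proof. intros H. induction l.
  - unfold sumL; simpl. apply derivable_continuous, derivable_const.
  - unfold sumL in *; simpl. exact (continuity_plus _ _ (H a) IHl). Qed.

Lemma sum_cube_S f k : sumL f (cube (S k)) =
  sumL (fun u => f (false :: u)) (cube k) + sumL (fun u => f (true :: u)) (cube k).
Proof. simpl cube. rewrite sumL_app, !sumL_map. reflexivity. Qed.

Lemma weight_false u : weight (false :: u) = weight u. Proof. reflexivity. Qed.
Lemma weight_true u : weight (true :: u) = S (weight u). Proof. reflexivity. Qed.

Lemma in_cube_len m u : In u (cube m) -> length u = m.
Proof. revert u; induction m; simpl; intros u H.
  - destruct H as [<-|[]]; auto.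
  - apply in_app_or in H. destruct H as [H|H]; apply in_map_iff in H;
    destruct H as [v [<- Hv]]; simpl; f_equal; auto. Qed.
End S.
Lemma gf1 x m : sumL (fun u => x ^ weight u) (cube m) = (1 + x) ^ m.
Proof. induction m; [unfold sumL; simpl; ring|]. rewrite sum_cube_S.
  rewrite (sumL_ext (fun u => x ^ weight (true :: u)) (fun u => x * x ^ weight u))
    by (intros; rewrite weight_true; reflexivity).
  rewrite sumL_scal. simpl weight. change (fun u => x ^ weight (false :: u)) with (fun u => x ^ weight u).
  rewrite IHm. simpl. ring. Qed.

Lemma gf2 x m i : (i < m)%nat ->
  sumL (fun u => if nth i u false then x ^ weight u else 0) (cube m) = x * (1 + x) ^ (m - 1).
Proof. revert i; induction m; intros i Hi; [lia|]. rewrite sum_cube_S. destruct i.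
  - simpl nth. rewrite sumL_zero0.
    rewrite (sumL_ext (fun u => x ^ weight (true :: u)) (fun u => x * x ^ weight u))
      by (intros; rewrite weight_true; reflexivity).
    rewrite sumL_scal, gf1. replace (S m - 1)%nat with m by lia. ring.
  - simpl nth.
    rewrite (sumL_ext (fun u => if nth i u false then x ^ weight (true :: u) else 0)
      (fun u => x * (if nth i u false then x ^ weight u else 0)))
      by (intros u _; rewrite weight_true; destruct (nth i u false); simpl; ring).
    rewrite sumL_scal. change (fun u => if nth i u false then x ^ weight (false :: u) else 0)
      with (fun u => if nth i u false then x ^ weight u else 0).
    rewrite IHm by lia. destruct m; [lia|]. replace (S (S m) - 1)%nat with (S m) by lia.
    replace (S m - 1)%nat with m by lia. simpl. ring. Qed.

Lemma pow_neg t w : (- t) ^ w = if Nat.odd w then - t ^ w else t ^ w.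
Proof. induction w; [reflexivity|]. simpl pow. rewrite IHw, Nat.odd_succ, <- Nat.negb_odd.
  destruct (Nat.odd w); simpl; ring. Qed.

Definition Ec m t := ((1 + t) ^ m + (1 - t) ^ m) / 2.
Definition Oc m t := ((1 + t) ^ m - (1 - t) ^ m) / 2.
Definition Mec m t := (t * (1 + t) ^ (m - 1) - t * (1 - t) ^ (m - 1)) / 2.
Definition Moc m t := (t * (1 + t) ^ (m - 1) + t * (1 - t) ^ (m - 1)) / 2.

Lemma sumO m t : sumL (fun u => if Nat.odd (weight u) then t ^ weight u else 0) (cube m) = Oc m t.
Proof. rewrite (sumL_ext _ (fun u => / 2 * (t ^ weight u + (-1) * (- t) ^ weight u))).
  - rewrite sumL_scal, sumL_plus, sumL_scal, !gf1. unfold Oc.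
    replace (1 + - t) with (1 - t) by ring. field.
  - intros u _. rewrite pow_neg. destruct (Nat.odd (weight u)); field. Qed.

Lemma sumE m t : sumL (fun u => if Nat.odd (weight u) then 0 else t ^ weight u) (cube m) = Ec m t.
Proof. rewrite (sumL_ext _ (fun u => / 2 * (t ^ weight u + (- t) ^ weight u))).
  - rewrite sumL_scal, sumL_plus, !gf1. unfold Ec.
    replace (1 + - t) with (1 - t) by ring. field.
  - intros u _. rewrite pow_neg. destruct (Nat.odd (weight u)); field. Qed.

Lemma sumMo m t i : (i < m)%nat -> sumL (fun u => if nth i u false then
   (if Nat.odd (weight u) then t ^ weight u else 0) else 0) (cube m) = Moc m t.
Proof. intros Hi. rewrite (sumL_ext _ (fun u => / 2 * ((if nth i u false then t ^ weight u else 0)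
     + (-1) * (if nth i u false then (- t) ^ weight u else 0)))).
  - rewrite sumL_scal, sumL_plus, sumL_scal, !gf2 by auto. unfold Moc.
    replace (1 + - t) with (1 - t) by ring. field.
  - intros u _. rewrite pow_neg. destruct (nth i u false), (Nat.odd (weight u)); field. Qed.

Lemma sumMe m t i : (i < m)%nat -> sumL (fun u => if nth i u false then
   (if Nat.odd (weight u) then 0 else t ^ weight u) else 0) (cube m) = Mec m t.
Proof. intros Hi. rewrite (sumL_ext _ (fun u => / 2 * ((if nth i u false then t ^ weight u else 0)
     + (if nth i u false then (- t) ^ weight u else 0)))).
  - rewrite sumL_scal, sumL_plus, !gf2 by auto. unfold Mec.
    replace (1 + - t) with (1 - t) by ring. field.
  - intros u _. rewrite pow_neg. destruct (nth i u false), (Nat.odd (weight u)); field. Qed.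
Definition O1 m t := sumL (fun u => if Nat.odd (weight u) then t ^ (pred (weight u)) else 0) (cube m).
Definition M1 m i t := sumL (fun u => if nth i u false then
   (if Nat.odd (weight u) then t ^ (pred (weight u)) else 0) else 0) (cube m).

Lemma O1_spec m t : t * O1 m t = Oc m t.
Proof. unfold O1. rewrite <- sumL_scal, <- sumO. apply sumL_ext. intros u _.
  destruct (Nat.odd (weight u)) eqn:Ho; [|ring].
  destruct (weight u) eqn:E; [discriminate|]. simpl. ring. Qed.

Lemma M1_spec m i t : (i < m)%nat -> t * M1 m i t = Moc m t.
Proof. intros Hi. unfold M1. rewrite <- sumL_scal, <- (sumMo m t i Hi). apply sumL_ext. intros u _.
  destruct (nth i u false); [|ring].
  destruct (Nat.odd (weight u)) eqn:Ho; [|ring].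
  destruct (weight u) eqn:E; [discriminate|]. simpl. ring. Qed.

Lemma zero_pow_pred w : (if Nat.odd w then 0 ^ (pred w) else 0) = if Nat.eqb w 1 then 1 else 0.
Proof. destruct w as [|[|w]]; simpl; auto. rewrite Nat.odd_succ_succ.
  destruct (Nat.odd w); auto. ring. Qed.

Lemma cnt0 m : sumL (fun u => if Nat.eqb (weight u) 0 then 1 else 0) (cube m) = 1.
Proof. induction m; [unfold sumL; simpl; ring|]. rewrite sum_cube_S.
  change (fun u => if Nat.eqb (weight (false :: u)) 0 then 1 else 0) with
    (fun u => if Nat.eqb (weight u) 0 then 1 else 0). rewrite IHm.
  rewrite (sumL_ext _ (fun _ => 0)) by (intros; rewrite weight_true; reflexivity).
  rewrite sumL_zero0; ring. Qed.

Lemma cnt1 m : sumL (fun u => if Nat.eqb (weight u) 1 then 1 else 0) (cube m) = INR m.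
Proof. induction m; [unfold sumL; simpl; ring|]. rewrite sum_cube_S.
  change (fun u => if Nat.eqb (weight (false :: u)) 1 then 1 else 0) with
    (fun u => if Nat.eqb (weight u) 1 then 1 else 0). rewrite IHm.
  rewrite (sumL_ext _ (fun u => if Nat.eqb (weight u) 0 then 1 else 0)) by (intros; rewrite weight_true; reflexivity).
  rewrite cnt0, S_INR; ring. Qed.

Lemma cnt3 m i : sumL (fun u => if nth i u false then (if Nat.eqb (weight u) 0 then 1 else 0) else 0) (cube m) = 0.
Proof. revert i; induction m; intros i; [unfold sumL; simpl; destruct i; simpl; ring|]. rewrite sum_cube_S.
  destruct i; simpl nth.
  - rewrite sumL_zero0.
    rewrite (sumL_ext _ (fun _ => 0)) by (intros; rewrite weight_true; reflexivity).
    rewrite sumL_zero0; ring.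
  - change (fun u => if nth i u false then (if Nat.eqb (weight (false :: u)) 0 then 1 else 0) else 0) with
    (fun u => if nth i u false then (if Nat.eqb (weight u) 0 then 1 else 0) else 0). rewrite IHm.
    rewrite (sumL_ext _ (fun _ => 0)).
    + rewrite sumL_zero0; ring.
    + intros u _; rewrite weight_true; simpl; destruct (nth i u false); auto. Qed.

Lemma cnt2 m i : (i < m)%nat -> sumL (fun u => if nth i u false then (if Nat.eqb (weight u) 1 then 1 else 0) else 0) (cube m) = 1.
Proof. revert i; induction m; intros i Hi; [lia|]. rewrite sum_cube_S. destruct i; simpl nth.
  - rewrite sumL_zero0.
    rewrite (sumL_ext _ (fun u => if Nat.eqb (weight u) 0 then 1 else 0)) by (intros; rewrite weight_true; reflexivity).
    rewrite cnt0; ring.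
  - change (fun u => if nth i u false then (if Nat.eqb (weight (false :: u)) 1 then 1 else 0) else 0) with
    (fun u => if nth i u false then (if Nat.eqb (weight u) 1 then 1 else 0) else 0). rewrite IHm by lia.
    rewrite (sumL_ext _ (fun u => if nth i u false then (if Nat.eqb (weight u) 0 then 1 else 0) else 0))
      by (intros; rewrite weight_true; reflexivity).
    rewrite cnt3; ring. Qed.

Lemma O1_0 m : O1 m 0 = INR m.
Proof. unfold O1. rewrite <- cnt1. apply sumL_ext; intros; apply zero_pow_pred. Qed.

Lemma M1_0 m i : (i < m)%nat -> M1 m i 0 = 1.
Proof. intros Hi. unfold M1. rewrite <- (cnt2 m i Hi). apply sumL_ext; intros.
  destruct (nth i x false); auto. apply zero_pow_pred. Qed.

Lemma cont_pow n : continuity (fun t => t ^ n).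
Proof. apply derivable_continuous, derivable_pow. Qed.
Lemma cont_cst c : continuity (fun _ => c).
Proof. exact (derivable_continuous _ (derivable_const c)). Qed.

Lemma O1_cont m : continuity (O1 m).
Proof. unfold O1. apply (sumL_cont (fun u t => if Nat.odd (weight u) then t ^ (pred (weight u)) else 0)).
  intros u. destruct (Nat.odd (weight u)); [apply cont_pow|apply cont_cst]. Qed.
Lemma M1_cont m i : continuity (M1 m i).
Proof. unfold M1. apply (sumL_cont (fun u t => if nth i u false then
   (if Nat.odd (weight u) then t ^ (pred (weight u)) else 0) else 0)).
  intros u. destruct (nth i u false); [|apply cont_cst]. destruct (Nat.odd (weight u)); [apply cont_pow|apply cont_cst]. Qed.
Lemma Ec_cont m : continuity (Ec m).
Proof. apply derivable_continuous. unfold Ec. reg. Qed.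
Lemma Mec_cont m : continuity (Mec m).
Proof. apply derivable_continuous. unfold Mec. reg. Qed.
Lemma exists_t m gamma d : (1 < m)%nat -> gamma < 1/2 -> 0 <= d -> d < INR m * gamma ->
  exists t, 0 < t <= 1 /\
   (1 - d) * Mec m t * Oc m t + d * Moc m t * Ec m t = gamma * Ec m t * Oc m t.
Proof. intros Hm Hg Hd Hdm.
  set (f := fun t => (1 - d) * Mec m t * O1 m t + d * M1 m 0 t * Ec m t - gamma * Ec m t * O1 m t).
  assert (Hc : continuity f).
  { intros x. unfold f. pose proof (O1_cont m x). pose proof (M1_cont m 0 x).
    pose proof (Ec_cont m x). pose proof (Mec_cont m x).
    apply continuity_pt_minus; [apply continuity_pt_plus|].
    - apply continuity_pt_mult; auto. apply continuity_pt_mult; auto. apply continuity_pt_const. intros a b; auto.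
    - apply continuity_pt_mult; auto. apply continuity_pt_mult; auto. apply continuity_pt_const. intros a b; auto.
    - apply continuity_pt_mult; auto. apply continuity_pt_mult; auto. apply continuity_pt_const. intros a b; auto. }
  assert (H0 : f 0 < 0).
  { unfold f. rewrite O1_0, M1_0 by lia. unfold Mec, Ec.
    replace (1 + 0) with 1 by ring. replace (1 - 0) with 1 by ring. rewrite !pow1.
    match goal with |- ?e < 0 => replace e with (d - INR m * gamma) by field end. lra. }
  assert (H1 : 0 < f 1).
  { unfold f. assert (E1 : O1 m 1 = Oc m 1) by (rewrite <- O1_spec; ring).
    assert (E2 : M1 m 0 1 = Moc m 1) by (rewrite <- (M1_spec m 0 1) by lia; ring).
    rewrite E1, E2. unfold Mec, Moc, Ec, Oc.
    replace (1 - 1) with 0 by ring. replace (1 + 1) with 2 by ring.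
    rewrite !pow_i by lia.
    assert (E3 : 2 ^ m = 2 * 2 ^ (m - 1)) by (replace m with (S (m - 1)) at 1 by lia; reflexivity).
    rewrite E3.
    assert (0 < 2 ^ (m - 1)) by (apply pow_lt; lra).
    set (a := 2 ^ (m - 1)) in *.
    replace ((1 - d) * ((1 * a - 1 * 0) / 2) * ((2 * a - 0) / 2) + d * ((1 * a + 1 * 0) / 2) * ((2 * a + 0) / 2) -
      gamma * ((2 * a + 0) / 2) * ((2 * a - 0) / 2)) with (a * a * (1/2 - gamma)) by field.
    apply Rmult_lt_0_compat; [apply Rmult_lt_0_compat|]; lra. }
  destruct (IVT f 0 1 Hc Rlt_0_1 H0 H1) as [z [[Hz0 Hz1] Hfz]].
  assert (Hzp : 0 < z). { destruct Hz0 as [Hz0|Hz0]; auto. subst z. lra. }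
  exists z. split; [lra|].
  assert (z * f z = 0) by (rewrite Hfz; ring). unfold f in H.
  rewrite <- O1_spec, <- (M1_spec m 0 z) by lia.
  replace ((1 - d) * Mec m z * (z * O1 m z) + d * (z * M1 m 0 z) * Ec m z) with
    (z * ((1 - d) * Mec m z * O1 m z + d * M1 m 0 z * Ec m z)) by ring.
  lra. Qed.
Fixpoint sumI (g : nat -> R) (n : nat) : R :=
  match n with O => 0 | S k => sumI g k + g k end.

Lemma sumI_shift g n : sumI g (S n) = g O + sumI (fun i => g (S i)) n.
Proof. induction n; simpl in *; [ring|]. rewrite IHn. ring. Qed.

Lemma sumI_ext g1 g2 n : (forall i, (i < n)%nat -> g1 i = g2 i) -> sumI g1 n = sumI g2 n.
Proof. induction n; intros H; simpl; auto. rewrite H by lia. rewrite IHn; [auto|intros; apply H; lia]. Qed.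

Lemma sumI_const c n : sumI (fun _ => c) n = INR n * c.
Proof. induction n; simpl sumI; [simpl; ring|]. rewrite IHn, S_INR; ring. Qed.

Lemma weight_sumI u : INR (weight u) = sumI (fun i => if nth i u false then 1 else 0) (length u).
Proof. induction u as [|b u IH]; [reflexivity|]. simpl length. rewrite sumI_shift. simpl nth.
  destruct b; [rewrite weight_true, S_INR|rewrite weight_false]; rewrite IH; ring. Qed.

Lemma sumL_sumI (Q : list bool -> R) g n l :
  sumL (fun u => Q u * sumI (g u) n) l = sumI (fun i => sumL (fun u => Q u * g u i) l) n.
Proof. induction n; simpl sumI.
  - rewrite (sumL_ext _ (fun _ => 0)) by (intros; ring). apply sumL_zero0.
  - rewrite <- IHn, <- sumL_plus. apply sumL_ext; intros; ring. Qed.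

Section Feas.
Variables (m : nat) (gamma d : R) (Q : list bool -> R).
Hypothesis HQ : feasible m gamma d Q.

Lemma L_wsum : sumL (fun u => Q u * INR (weight u)) (cube m) = INR m * gamma.
Proof. destruct HQ as [_ [_ [Hm _]]].
  rewrite (sumL_ext _ (fun u => Q u * sumI (fun i => if nth i u false then 1 else 0) m)).
  2:{ intros u Hu. rewrite weight_sumI, (in_cube_len m u Hu). auto. }
  rewrite sumL_sumI, <- sumI_const. apply sumI_ext. intros i Hi. rewrite <- (Hm i Hi).
  apply sumL_ext; intros; destruct (nth i x false); ring. Qed.

Lemma L_even : sumL (fun u => if Nat.odd (weight u) then 0 else Q u) (cube m) = 1 - d.
Proof. destruct HQ as [_ [H1 [_ H2]]]. rewrite <- H1, <- H2.
  assert (sumL Q (cube m) = sumL (fun u => if Nat.odd (weight u) then Q u else 0) (cube m) +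
     sumL (fun u => if Nat.odd (weight u) then 0 else Q u) (cube m)).
  { rewrite <- sumL_plus. apply sumL_ext; intros; destruct (Nat.odd (weight x)); ring. }
  lra. Qed.

Lemma L_zero_odd u : d = 0 -> In u (cube m) -> Nat.odd (weight u) = true -> Q u = 0.
Proof. intros Hd Hu Ho. destruct HQ as [Hn [_ [_ H2]]].
  pose proof (sumL_nonneg_zero (fun u => if Nat.odd (weight u) then Q u else 0) (cube m)) as K.
  specialize (K ltac:(intros x Hx; cbv beta; destruct (Nat.odd (weight x)); [apply Hn; auto|lra]) ltac:(lra) u Hu).
  cbv beta in K; rewrite Ho in K; auto. Qed.

Lemma L_zero_even u : d = 1 -> In u (cube m) -> Nat.odd (weight u) = false -> Q u = 0.
Proof. intros Hd Hu Ho. destruct HQ as [Hn _].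
  pose proof (sumL_nonneg_zero (fun u => if Nat.odd (weight u) then 0 else Q u) (cube m)) as K.
  specialize (K ltac:(intros x Hx; cbv beta; destruct (Nat.odd (weight x)); [lra|apply Hn; auto]) ltac:(rewrite L_even; lra) u Hu).
  cbv beta in K; rewrite Ho in K; auto. Qed.

Lemma L_par_le : d <= INR m * gamma.
Proof. rewrite <- L_wsum. destruct HQ as [Hn [_ [_ H2]]]. rewrite <- H2. apply sumL_le.
  intros u Hu. pose proof (Hn u Hu). destruct (Nat.odd (weight u)) eqn:Ho.
  - destruct (weight u) eqn:E; [discriminate|]. rewrite S_INR. pose proof (pos_INR n). nra.
  - pose proof (pos_INR (weight u)). nra. Qed.
End Feas.
Definition ce m d t := (1 - d) / Ec m t.
Definition co m d t := d / Oc m t.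
Definition Pd m d t (u : list bool) := (if Nat.odd (weight u) then co m d t else ce m d t) * t ^ weight u.

Lemma pos_EO m t : (0 < m)%nat -> 0 < t <= 1 -> 0 < Oc m t /\ Oc m t <= Ec m t.
Proof. intros Hm Ht. unfold Oc, Ec. destruct m as [|k]; [lia|].
  assert (A : (1 - t) ^ k <= (1 + t) ^ k) by (apply pow_incr; lra).
  assert (B : 0 < (1 + t) ^ k) by (apply pow_lt; lra).
  assert (C : 0 <= (1 - t) ^ k) by (apply pow_le; lra).
  simpl pow. split; nra. Qed.

Section PdS.
Variables (m : nat) (gamma d t : R).
Hypotheses (Hm : (1 < m)%nat) (Ht : 0 < t <= 1) (Hd : 0 <= d <= 1).

Lemma Oc_pos : 0 < Oc m t. Proof. apply pos_EO; auto; lia. Qed.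
Lemma Ec_pos : 0 < Ec m t. Proof. pose proof (pos_EO m t ltac:(lia) Ht). lra. Qed.
Lemma co_nn : 0 <= co m d t. Proof. unfold co. pose proof Oc_pos. unfold Rdiv; apply Rmult_le_pos; [lra|left; apply Rinv_0_lt_compat; lra]. Qed.
Lemma ce_nn : 0 <= ce m d t. Proof. unfold ce. pose proof Ec_pos. unfold Rdiv; apply Rmult_le_pos; [lra|left; apply Rinv_0_lt_compat; lra]. Qed.

Lemma Pd_split u : Pd m d t u = co m d t * (if Nat.odd (weight u) then t ^ weight u else 0)
   + ce m d t * (if Nat.odd (weight u) then 0 else t ^ weight u).
Proof. unfold Pd. destruct (Nat.odd (weight u)); ring. Qed.

Lemma Pd_feasible : (1 - d) * Mec m t * Oc m t + d * Moc m t * Ec m t = gamma * Ec m t * Oc m t ->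
  feasible m gamma d (Pd m d t).
Proof. intros Heq. pose proof Oc_pos. pose proof Ec_pos. pose proof co_nn. pose proof ce_nn.
  repeat split.
  - intros u _. unfold Pd. apply Rmult_le_pos; [destruct (Nat.odd (weight u)); auto|]. apply pow_le; lra.
  - rewrite (sumL_ext _ _ _ (fun u _ => Pd_split u)), sumL_plus, !sumL_scal, sumO, sumE.
    unfold co, ce. field. lra.
  - intros i Hi. rewrite (sumL_ext _ (fun u => co m d t * (if nth i u false then
      (if Nat.odd (weight u) then t ^ weight u else 0) else 0) + ce m d t * (if nth i u false then
      (if Nat.odd (weight u) then 0 else t ^ weight u) else 0))).
    + rewrite sumL_plus, !sumL_scal, sumMo, sumMe by auto. unfold co, ce.
      replace (d / Oc m t * Moc m t + (1 - d) / Ec m t * Mec m t) with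
        (((1 - d) * Mec m t * Oc m t + d * Moc m t * Ec m t) / (Ec m t * Oc m t)) by (field; lra).
      rewrite Heq. field. lra.
    + intros u _. rewrite Pd_split. destruct (nth i u false), (Nat.odd (weight u)); ring.
  - rewrite (sumL_ext _ (fun u => co m d t * (if Nat.odd (weight u) then t ^ weight u else 0))).
    + rewrite sumL_scal, sumO. unfold co. field. lra.
    + intros u _. unfold Pd. destruct (Nat.odd (weight u)); ring. Qed.

Variable Q : list bool -> R.
Hypothesis HQ : feasible m gamma d Q.

Lemma Pd_zero u : In u (cube m) -> Pd m d t u = 0 -> Q u = 0.
Proof. intros Hu H0. unfold Pd in H0. pose proof (pow_lt t (weight u) ltac:(lra)) as Hp.
  pose proof Oc_pos as Ho1. pose proof Ec_pos as He1.
  destruct (Nat.odd (weight u)) eqn:Ho.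
  - apply (L_zero_odd m gamma d Q HQ); auto. unfold co in H0.
    apply Rmult_integral in H0. destruct H0 as [H2|H2]; [|lra]. unfold Rdiv in H2.
    apply Rmult_integral in H2. destruct H2; auto. pose proof (Rinv_neq_0_compat (Oc m t) ltac:(lra)). lra.
  - apply (L_zero_even m gamma d Q HQ); auto. unfold ce in H0.
    apply Rmult_integral in H0. destruct H0 as [H2|H2]; [|lra]. unfold Rdiv in H2.
    apply Rmult_integral in H2. destruct H2; [lra|]. pose proof (Rinv_neq_0_compat (Ec m t) ltac:(lra)). lra. Qed.

Lemma KL : sumL (fun u => Q u * ln (Pd m d t u)) (cube m) =
  (1 - d) * ln (ce m d t) + d * ln (co m d t) + INR m * gamma * ln t.
Proof.
  rewrite (sumL_ext _ (fun u => ln (co m d t) * (if Nat.odd (weight u) then Q u else 0)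
     + ln (ce m d t) * (if Nat.odd (weight u) then 0 else Q u) + ln t * (Q u * INR (weight u)))).
  - rewrite !sumL_plus, !sumL_scal, (L_wsum m gamma d Q HQ), (L_even m gamma d Q HQ). destruct HQ as [_ [_ [_ ->]]]. ring.
  - intros u Hu. pose proof (pow_lt t (weight u) ltac:(lra)).
    destruct (Req_dec (Pd m d t u) 0) as [Hz|Hz].
    + rewrite (Pd_zero u Hu Hz). unfold Pd in Hz. destruct (Nat.odd (weight u)); ring.
    + unfold Pd in *. pose proof co_nn. pose proof ce_nn.
      destruct (Nat.odd (weight u)).
      * assert (0 < co m d t) by (destruct H0; auto; subst; exfalso; apply Hz; rewrite <- H0; ring).
        rewrite ln_mult, ln_pow by lra. ring.
      * assert (0 < ce m d t) by (destruct H1; auto; exfalso; apply Hz; rewrite <- H1; ring).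
        rewrite ln_mult, ln_pow by lra. ring. Qed.

Lemma gibbs_pt q p : 0 <= q -> 0 <= p -> (p = 0 -> q = 0) -> q * ln p <= q * ln q + p - q.
Proof. intros Hq Hp Hpq. destruct Hq as [Hq|Hq]; [|subst; lra].
  destruct Hp as [Hp|Hp]; [|subst; specialize (Hpq eq_refl); lra].
  pose proof (exp_ineq1_le (ln (p / q))). rewrite exp_ln in H by (apply Rdiv_lt_0_compat; auto).
  unfold Rdiv in H. rewrite ln_mult, ln_Rinv in H by (auto; apply Rinv_0_lt_compat; auto).
  assert (q * (1 + (ln p + - ln q)) <= q * (p * / q)) by (apply Rmult_le_compat_l; lra).
  replace (q * (p * / q)) with p in H0 by (field; lra). lra. Qed.

Lemma gibbs : sumL (fun u => Q u * ln (Pd m d t u)) (cube m) <= sumL (fun u => Q u * ln (Q u)) (cube m).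
Proof. destruct HQ as [Hn [H1 _]].
  assert (HP1 : sumL (Pd m d t) (cube m) = 1).
  { pose proof Pd_feasible.
    rewrite (sumL_ext _ _ _ (fun u _ => Pd_split u)), sumL_plus, !sumL_scal, sumO, sumE.
    pose proof Oc_pos. pose proof Ec_pos. unfold co, ce. field. lra. }
  eapply Rle_trans.
  - apply (sumL_le _ (fun u => Q u * ln (Q u) + Pd m d t u - Q u)).
    intros u Hu. apply gibbs_pt; auto.
    + unfold Pd. apply Rmult_le_pos; [destruct (Nat.odd (weight u)); [apply co_nn|apply ce_nn]|]. apply pow_le; lra.
    + apply Pd_zero; auto.
  - unfold Rminus. rewrite !sumL_plus. rewrite (sumL_ext (fun x => - Q x) (fun x => -1 * Q x)) by (intros; ring).
    rewrite sumL_scal, HP1, H1. lra. Qed.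
End PdS.
Lemma ln2_pos : 0 < ln 2.
Proof. pose proof ln_lt_2. lra. Qed.

Lemma ent_eq m Q : ent m Q = - sumL (fun u => Q u * ln (Q u)) (cube m) / ln 2.
Proof. unfold ent, plogp, log2. rewrite (sumL_ext _ (fun u => / ln 2 * (Q u * ln (Q u)))).
  - rewrite sumL_scal. unfold Rdiv. ring.
  - intros; unfold Rdiv; ring. Qed.

Definition Bnd m gamma d t := - ((1 - d) * ln (ce m d t) + d * ln (co m d t) + INR m * gamma * ln t) / ln 2.

Lemma ent_le m gamma d t Q : (1 < m)%nat -> 0 < t <= 1 -> 0 <= d <= 1 ->
  feasible m gamma d Q -> ent m Q <= Bnd m gamma d t.
Proof. intros Hm Ht Hd HQ. rewrite ent_eq. unfold Bnd.
  pose proof (gibbs m gamma d t Hm Ht Hd Q HQ). rewrite (KL m gamma d t Hm Ht Hd Q HQ) in H.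
  pose proof ln2_pos. unfold Rdiv. apply Rmult_le_compat_r; [left; apply Rinv_0_lt_compat; auto|]. lra. Qed.

Lemma ent_Pd m gamma d t : (1 < m)%nat -> 0 < t <= 1 -> 0 <= d <= 1 ->
  feasible m gamma d (Pd m d t) -> ent m (Pd m d t) = Bnd m gamma d t.
Proof. intros Hm Ht Hd HQ. rewrite ent_eq. unfold Bnd. rewrite (KL m gamma d t Hm Ht Hd _ HQ). auto. Qed.

Lemma lub_Hstar m gamma d b : (exists Q, feasible m gamma d Q) ->
  (forall Q, feasible m gamma d Q -> ent m Q <= b) -> is_lub (entropies m gamma d) (Hstar m gamma d).
Proof. intros [Q HQ] Hb. unfold Hstar. apply epsilon_spec.
  destruct (completeness (entropies m gamma d)) as [x Hx].
  - exists b. intros y [Q' [HQ' ->]]. apply Hb; auto.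
  - exists (ent m Q). exists Q; auto.
  - exists x; auto. Qed.

Lemma xlog x y : 0 <= x -> 0 < y -> x * ln (x / y) = x * ln x - x * ln y.
Proof. intros [Hx|Hx] Hy; [|subst; ring]. unfold Rdiv. rewrite ln_mult, ln_Rinv; auto.
  ring. apply Rinv_0_lt_compat; auto. Qed.

Lemma Bnd_h m gamma d t : (1 < m)%nat -> 0 < t <= 1 -> 0 <= d <= 1 ->
  Bnd m gamma d t - h d = ((1 - d) * ln (Ec m t) + d * ln (Oc m t) - INR m * gamma * ln t) / ln 2.
Proof. intros Hm Ht Hd. pose proof (Oc_pos m t Hm Ht). pose proof (Ec_pos m t Hm Ht).
  unfold Bnd, h, plogp, log2, ce, co.
  assert (E1 := xlog (1 - d) (Ec m t) ltac:(lra) H0). assert (E2 := xlog d (Oc m t) ltac:(lra) H).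
  pose proof ln2_pos. rewrite E1, E2. field. lra. Qed.
Theorem mainTheorem15 (m : nat) (gamma d1 d2 : R) :
  (1 < m)%nat -> 0 < gamma < 1 / 2 ->
  0 <= d1 -> d1 <= d2 -> d2 <= 1 ->
  ER_le (F m gamma d2) (F m gamma d1).
Proof.
  intros Hm Hg Hd1 H12 Hd2. unfold F.
  destruct (excluded_middle_informative (exists Q, feasible m gamma d2 Q)) as [[Q2 HQ2]|Hn2];
    [|simpl; auto].
  destruct H12 as [H12|H12].
  2:{ subst d2. destruct (excluded_middle_informative (exists Q, feasible m gamma d1 Q)) as [_|Hn].
      - simpl; lra.
      - exfalso; apply Hn; exists Q2; auto. }
  assert (Hpar : d1 < INR m * gamma) by (pose proof (L_par_le m gamma d2 Q2 HQ2); lra).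
  destruct (exists_t m gamma d1 Hm ltac:(lra) Hd1 Hpar) as [t [Ht Heq]].
  assert (Hd1' : 0 <= d1 <= 1) by lra. assert (Hd2' : 0 <= d2 <= 1) by lra.
  assert (HQ1 := Pd_feasible m gamma d1 t Hm Ht Hd1' Heq).
  destruct (excluded_middle_informative (exists Q, feasible m gamma d1 Q)) as [_|Hn].
  2:{ exfalso; apply Hn; eexists; eauto. }
  simpl.
  assert (L2 := lub_Hstar m gamma d2 (Bnd m gamma d2 t) (ex_intro _ Q2 HQ2)
     (fun Q HQ => ent_le m gamma d2 t Q Hm Ht Hd2' HQ)).
  assert (L1 := lub_Hstar m gamma d1 (Bnd m gamma d1 t) (ex_intro _ _ HQ1)
     (fun Q HQ => ent_le m gamma d1 t Q Hm Ht Hd1' HQ)).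
  assert (U2 : Hstar m gamma d2 <= Bnd m gamma d2 t).
  { apply L2. intros x [Q [HQ ->]]. apply ent_le; auto. }
  assert (U1 : Bnd m gamma d1 t <= Hstar m gamma d1).
  { apply L1. exists (Pd m d1 t). split; auto. symmetry; apply ent_Pd; auto. }
  assert (Bnd m gamma d2 t - h d2 <= Bnd m gamma d1 t - h d1).
  { rewrite !Bnd_h by auto. pose proof ln2_pos.
    destruct (pos_EO m t ltac:(lia) Ht) as [HO HOE].
    assert (ln (Oc m t) <= ln (Ec m t)).
    { destruct HOE as [HOE|HOE]; [left; apply ln_increasing; auto|rewrite HOE; lra]. }
    unfold Rdiv. apply Rmult_le_compat_r; [left; apply Rinv_0_lt_compat; auto|]. nra. }
  lra.
Qed.
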